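(* For integers $n,k$, let $A(n,k)$ be the number of partitions $\lambda\in\mathcal{H}_n$ with $\mathrm{rep}(\lambda)=k$ (so $A(n,k)=0$ if $k<0$ or $n\le 0$). Then $A(1,0)=1$ and for all $n\ge 2$ and all integers $k$, $$A(n,k)=A(n-1,k)+A(n-1,k-1)+A(n-2,k)-A(n-2,k-1).$$
   Context: A partition is a finite nonempty weakly decreasing sequence $\lambda=(\lambda_1,\ldots,\lambda_k)$ of positive integers; $\ell(\lambda)=k$ is its number of parts. The perimeter is $\Gamma(\lambda)=\lambda_1+\ell(\lambda)-1$; $\mathcal{H}_n$ is the set of partitions with perimeter $n$ (empty for $n\le 0$). $\mathrm{rep}(\lambda)=|\{1\le i\le \ell(\lambda)-1:\lambda_i=\lambda_{i+1}\}|$. *)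

(* Defs.v *)
From mathcomp Require Import all_boot all_order all_algebra.
Set Implicit Arguments. Unset Strict Implicit. Unset Printing Implicit Defensive.
Import Order.TTheory GRing.Theory Num.Theory.

Definition is_partition (s : seq nat) : bool :=
  [&& s != [::], all (fun x => 0 < x) s & sorted geq s].

Definition nparts (s : seq nat) : nat := size s.

Definition perimeter (s : seq nat) : int :=
  (Posz (head 0 s) + Posz (nparts s) - 1)%R.

Definition rep (s : seq nat) : nat :=
  count (fun i => nth 0 s i == nth 0 s i.+1) (iota 0 (size s).-1).

Fixpoint seqs_upto (b m : nat) : seq (seq nat) :=
  match m with
  | 0 => [:: [::]]
  | m'.+1 => [::] :: [seq x :: s | x <- iota 0 b.+1, s <- seqs_upto b m']
  end.

(* A(n,k) = #{ lambda in H_n : rep(lambda) = k }.  Every lambda in H_n has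
   length <= n and parts <= n, so it suffices to search seqs_upto |n| |n|. *)
Definition A (n k : int) : nat :=
  count (fun s => [&& is_partition s, perimeter s == n & Posz (rep s) == k])
        (seqs_upto `|n|%N `|n|%N).

(* Main.v *)
Set Warnings "-notation-overridden,-ambiguous-paths".
Require Import Defs.
From mathcomp Require Import all_boot all_order all_algebra zify.
Import Order.TTheory GRing.Theory Num.Theory.
Set Warnings "-notation-overridden,-ambiguous-paths".

Lemma mem_seqs_upto b m s :
  (s \in seqs_upto b m) = (size s <= m) && all (fun x => x <= b) s.
Proof.
elim: m s => [|m IH] [|x s] //.
have -> : (x :: s \in seqs_upto b m.+1) = (x :: s \in [seq y :: t | y <- iota 0 b.+1, t <- seqs_upto b m]) by [].
apply/flatten_mapP/idP.
  case=> y; rewrite mem_iota => Hy /mapP [t Ht [-> ->]].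
  move: Ht; rewrite IH /= ltnS => /andP [-> ->]; by move: Hy; rewrite add0n ltnS => /andP [_ ->].
move=> /andP [H1 /andP [H2 H3]]; exists x.
  by rewrite mem_iota add0n ltnS.
by apply/mapP; exists s => //; rewrite IH -ltnS H1.
Qed.

Lemma uniq_seqs_upto b m : uniq (seqs_upto b m).
Proof.
elim: m => [|m IH] //.
have -> : seqs_upto b m.+1 = [::] :: [seq y :: t | y <- iota 0 b.+1, t <- seqs_upto b m] by [].
rewrite cons_uniq; apply/andP; split.
  by apply/negP => /flatten_mapP [y _ /mapP [t _]].
have := (allpairs_uniq (f := fun (y : nat) (t : seq nat) => y :: t) (iota_uniq 0 b.+1) IH).
apply => -[x1 s1] [x2 s2] _ _ /= [-> ->] //.
Qed.

Lemma perimeter_eq s n : s != [::] ->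
  (perimeter s == Posz n) = (head 0 s + size s == n.+1)%N.
Proof.
move=> _; rewrite /perimeter /nparts subr_eq -!PoszD eqz_nat addn1 //.
Qed.

Lemma geq_trans' : transitive geq.
Proof. by move=> a b c /= H1 H2; apply: leq_trans H2 H1. Qed.

Definition good n s := is_partition s && (perimeter s == Posz n).

Lemma good_mem n s : good n s -> s \in seqs_upto n n.
Proof.
case/andP=> /and3P [Hne Hpos Hs]; rewrite perimeter_eq // => /eqP Hp.
rewrite mem_seqs_upto.
case: s Hne Hpos Hs Hp => [|x s] //= _ /andP [Hx Hpos] Hs Hp.
apply/andP; split; first lia.
have := order_path_min geq_trans' Hs => Hall.
rewrite (_ : x <= n) /=; last lia.
apply/allP => y Hy; have /= := allP Hall y Hy; lia.
Qed.

Definition L n := filter (good n) (seqs_upto n n).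

Lemma mem_L n s : (s \in L n) = good n s.
Proof. rewrite mem_filter; case H: (good n s) => //=; exact: good_mem. Qed.

Lemma uniq_L n : uniq (L n).
Proof. exact/filter_uniq/uniq_seqs_upto. Qed.

Lemma A_L n k : A (Posz n) k = count (fun s => Posz (rep s) == k) (L n).
Proof.
rewrite /A /L count_filter; apply: eq_count => s /=.
by rewrite /good andbA andbC.
Qed.

Lemma part_cons2 x y t :
  is_partition [:: x, y & t] = [&& 0 < x, y <= x & is_partition (y :: t)].
Proof.
rewrite /is_partition /=.
apply/idP/idP.
  by case/and3P => /and3P [-> -> ->] -> ->.
by case/and4P => -> -> /andP [-> ->] ->.
Qed.

Lemma part_single x : is_partition [:: x] = (0 < x).
Proof. by rewrite /is_partition /=; case: (0 < x). Qed.

Lemma rep_single x : rep [:: x] = 0.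
Proof. by []. Qed.

Lemma rep_cons2 x y t : rep [:: x, y & t] = (x == y) + rep (y :: t).
Proof.
rewrite /rep /=; congr (_ + _).
by rewrite (iotaDl 1 0) count_map; apply: eq_count => i.
Qed.

Lemma part_head_pos y t : is_partition (y :: t) -> 0 < y.
Proof. by rewrite /is_partition /= => /andP [/andP [H _] _]. Qed.

Definition f n m (mu : seq nat) := (head 0 mu + (n.-1 - m)) :: mu.

Definition Hrec n := [:: n] :: flatten [seq [seq f n m mu | mu <- L m] | m <- iota 0 n].

Lemma good_nonempty n s : good n s -> exists y t, s = y :: t.
Proof. by case: s => [|y t] // _; exists y, t. Qed.

Lemma mem_Hrec n s : 0 < n -> (s \in Hrec n) = good n s.
Proof.
move=> n0; rewrite in_cons; apply/idP/idP.
  case/orP.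
    move/eqP => ->; rewrite /good part_single n0 perimeter_eq //=; lia.
  case/flatten_mapP => m; rewrite mem_iota add0n => /andP [_ Hm] /mapP [mu].
  rewrite mem_L => Hmu ->.
  have [y [t Eq]] := @good_nonempty _ _ Hmu; subst mu.
  move: Hmu; rewrite /good /f /= part_cons2 !perimeter_eq //= => /andP [Hp /eqP Hper].
  have Hy := @part_head_pos _ _ Hp.
  rewrite Hp andbT; apply/andP; split; first (apply/andP; split; lia).
  apply/eqP; lia.
case: s => [|x [|y t]] //.
  rewrite /good perimeter_eq //= => /andP [_ /eqP H].
  by apply/orP; left; apply/eqP; congr [:: _]; lia.
rewrite /good part_cons2 !perimeter_eq //= => /andP [/and3P [Hx Hyx Hp] /eqP Hper].
apply/orP; right; apply/flatten_mapP; exists (y + size t).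
  rewrite mem_iota add0n /=; lia.
apply/mapP; exists (y :: t).
  rewrite mem_L /good Hp perimeter_eq //=; apply/eqP; lia.
rewrite /f /=; congr (_ :: _); lia.
Qed.

Lemma uniq_flatten_key (I T : eqType) (F : I -> seq T) (g : T -> I) r :
  uniq r -> (forall i, uniq (F i)) -> (forall i x, x \in F i -> g x = i) ->
  uniq (flatten (map F r)).
Proof.
move=> Ur UF HF; elim: r Ur => [|i r IH] //= /andP [Hi Ur].
rewrite cat_uniq UF IH // andbT /=.
apply/hasPn => x /flatten_mapP [j Hj Hx]; apply/negP => Hx'.
move: (HF _ _ Hx) (HF _ _ Hx') => -> Eij; subst j.
by rewrite Hj in Hi.
Qed.

Lemma good_key m mu : good m mu -> (head 0 mu + size mu).-1 = m.
Proof.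
case: mu => [|y t] //; rewrite /good perimeter_eq // => /andP [_ /eqP ->] //.
Qed.

Lemma uniq_Hrec n : uniq (Hrec n).
Proof.
rewrite /Hrec cons_uniq; apply/andP; split.
  apply/negP => /flatten_mapP [m _ /mapP [mu]].
  rewrite mem_L => /(@good_nonempty _ _) [y [t ->]] //.
apply: (@uniq_flatten_key _ _ _ (fun s => (head 0 (behead s) + size (behead s)).-1)).
- exact: iota_uniq.
- move=> m; rewrite map_inj_uniq ?uniq_L //.
  by move=> a b [_ ->].
- move=> m x /mapP [mu]; rewrite mem_L => /good_key Hk -> /=; exact: Hk.
Qed.

Lemma A_rec n k : 0 < n ->
  A (Posz n) k = ((Posz 0 == k) + sumn [seq A (Posz m) k | m <- iota 0 n.-1]
                  + A (Posz n.-1) (k - 1))%N.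
Proof.
move=> n0; rewrite A_L.
have Hperm : perm_eq (L n) (Hrec n).
  apply: uniq_perm; [exact: uniq_L | exact: uniq_Hrec | ].
  by move=> s; rewrite mem_L mem_Hrec.
rewrite (permP Hperm) /Hrec /= count_flatten -map_comp.
rewrite -[in iota 0 n](prednK n0) -addn1 iotaD map_cat sumn_cat /= addn0 add0n addnA.
congr (_ + _ + _).
  congr sumn; apply/eq_in_map => m; rewrite mem_iota add0n => /andP [_ Hm] /=.
  rewrite A_L count_map; apply: eq_in_count => mu; rewrite mem_L => Hmu.
  have [y [t Eq]] := @good_nonempty _ _ Hmu; subst mu.
  rewrite /preim /f /= rep_cons2.
  have -> : (y + (n.-1 - m) == y) = false by apply/negbTE/eqP; lia.
  by rewrite add0n.
rewrite A_L count_map; apply: eq_in_count => mu; rewrite mem_L => Hmu.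
have [y [t Eq]] := @good_nonempty _ _ Hmu; subst mu.
rewrite /preim /f /= rep_cons2 subnn addn0 eqxx.
by apply/eqP/eqP; lia.
Qed.

Lemma sumS k M : sumn [seq A (Posz m) k | m <- iota 0 M.+1] =
  (sumn [seq A (Posz m) k | m <- iota 0 M] + A (Posz M) k)%N.
Proof. by rewrite -addn1 iotaD map_cat sumn_cat /= addn0. Qed.

Local Open Scope ring_scope.

Theorem lemma2p1 :
  A 1 0 = 1%N /\
  (forall n k : int, 2 <= n ->
     (A n k)%:Z = (A (n - 1) k)%:Z + (A (n - 1) (k - 1))%:Z
                  + (A (n - 2) k)%:Z - (A (n - 2) (k - 1))%:Z).
Proof.
split; first by vm_compute.
move=> [N|N] k //; rewrite lez_nat.
case: N => [|[|M]] // _.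
have -> : (Posz M.+2 - 1 = Posz M.+1)%R by lia.
have -> : (Posz M.+2 - 2 = Posz M)%R by lia.
rewrite (A_rec M.+2 k (ltn0Sn _)) (A_rec M.+1 k (ltn0Sn _)) sumS /=.
lia.
Qed.
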